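(* Let $\varphi$ be a $w^*$-continuous positive linear map on $B(\mathcal H)$ and let $A\in B(\mathcal H)$ be selfadjoint with $\varphi(A)\le A$. Let $A=B+C$ be the unique decomposition with $B=B^*$, $\varphi(B)=B$, and $C\ge0$, $\varphi(C)\le C$, $\varphi^k(C)\to0$ strongly as $k\to\infty$. Then $$\text{SOT-}\lim_{k\to\infty}\frac{\varphi^0(A)+\varphi^1(A)+\cdots+\varphi^{k-1}(A)}{k}=B.$$
   Context: $\varphi^0$ denotes the identity map. *)

(* Defs.v *)
From mathcomp Require Import all_boot all_order all_algebra.
From mathcomp Require Import reals complex.
Import GRing.Theory Num.Theory.
Set Implicit Arguments. Unset Strict Implicit. Unset Printing Implicit Defensive.
Local Open Scope ring_scope.
Local Open Scope complex_scope.

Section Hilbert.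
Variable R : realType.
Variable V : lmodType R[i].
(* the inner product, linear in the first argument *)
Variable ip : V -> V -> R[i].

Definition hnorm (x : V) : R[i] := sqrtC (ip x x).

Definition is_hilbert : Prop :=
  [/\ (forall a x y z, ip (a *: x + y) z = a * ip x z + ip y z),
      (forall x y, ip y x = (ip x y)^*),
      (forall x, 0 <= ip x x),
      (forall x, ip x x = 0 -> x = 0) &
      (forall u : nat -> V,
         (forall e : R[i], 0 < e -> exists N, forall m n, (N <= m)%N -> (N <= n)%N ->
              hnorm (u m - u n) < e) ->
         exists l, forall e : R[i], 0 < e -> exists N, forall n, (N <= n)%N ->
              hnorm (u n - l) < e)].

Definition bounded_op (T : V -> V) : Prop :=
  (forall a x y, T (a *: x + y) = a *: T x + T y) /\
  exists M : R[i], forall x, hnorm (T x) <= M * hnorm x.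

Definition selfadjoint (T : V -> V) : Prop := forall x y, ip (T x) y = ip x (T y).

Definition positive_op (T : V -> V) : Prop := forall x, 0 <= ip (T x) x.

Definition op_le (S T : V -> V) : Prop := positive_op (fun x => T x - S x).

Definition sot_conv (T : nat -> V -> V) (T0 : V -> V) : Prop :=
  forall x, forall e : R[i], 0 < e -> exists N, forall k, (N <= k)%N ->
    hnorm (T k x - T0 x) < e.

Definition sq_summable (xs : nat -> V) : Prop :=
  exists M : R[i], forall N, \sum_(n < N) ip (xs n) (xs n) <= M.

Definition series_to (s : nat -> R[i]) (c : R[i]) : Prop :=
  forall e : R[i], 0 < e -> exists N, forall n, (N <= n)%N ->
    `| \sum_(j < n) s j - c | < e.

Definition directed (I : Type) (le : I -> I -> Prop) : Prop :=
  [/\ inhabited I, (forall i, le i i), (forall i j k, le i j -> le j k -> le i k) &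
      (forall i j, exists k, le i k /\ le j k)].

(* convergence of a net (T_i) in B(H) to T0 in the sigma-weak (= weak-star) topology,
   generated by the functionals T |-> sum_n <T x_n, y_n> with (x_n), (y_n)
   square-summable *)
Definition wstar_conv (I : Type) (le : I -> I -> Prop) (T : I -> V -> V)
    (T0 : V -> V) : Prop :=
  forall xs ys : nat -> V, sq_summable xs -> sq_summable ys ->
  forall e : R[i], 0 < e -> exists i0, forall i, le i0 i ->
    forall c, series_to (fun n => ip (T i (xs n) - T0 (xs n)) (ys n)) c ->
      `|c| < e.

(* phi is a map on B(H) (its values off B(H) are irrelevant) *)
Definition maps_BH (phi : (V -> V) -> (V -> V)) : Prop :=
  forall T, bounded_op T -> bounded_op (phi T).

Definition linear_on_BH (phi : (V -> V) -> (V -> V)) : Prop :=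
  forall (a : R[i]) S T, bounded_op S -> bounded_op T ->
    phi (fun x => a *: S x + T x) = (fun x => a *: phi S x + phi T x).

Definition positive_map (phi : (V -> V) -> (V -> V)) : Prop :=
  forall T, bounded_op T -> positive_op T -> positive_op (phi T).

Definition wstar_continuous (phi : (V -> V) -> (V -> V)) : Prop :=
  forall (I : Type) (le : I -> I -> Prop), directed le ->
  forall (T : I -> V -> V) (T0 : V -> V),
    (forall i, bounded_op (T i)) -> bounded_op T0 ->
    wstar_conv le T T0 -> wstar_conv le (fun i => phi (T i)) (phi T0).

Definition cesaro (phi : (V -> V) -> (V -> V)) (A : V -> V) (k : nat) : V -> V :=
  fun x => (k%:R)^-1 *: \sum_(j < k) iter j phi A x.

End Hilbert.

(* Main.v *)
Require Import Defs.
From mathcomp Require Import all_boot all_order all_algebra.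
From mathcomp Require Import reals complex.
From mathcomp Require Import ring.
From Stdlib Require Import FunctionalExtensionality.
Import Order.TTheory GRing.Theory Num.Theory.
Local Open Scope ring_scope.
Local Open Scope complex_scope.

Section H.
Variable R : realType.
Variable V : lmodType R[i].
Variable ip : V -> V -> R[i].
Hypothesis ipl : forall a x y z, ip (a *: x + y) z = a * ip x z + ip y z.
Hypothesis ipc : forall x y, ip y x = (ip x y)^*.
Hypothesis ipp : forall x, 0 <= ip x x.
Hypothesis ipd : forall x, ip x x = 0 -> x = 0.

Lemma ipDl x y z : ip (x + y) z = ip x z + ip y z.
Proof. by rewrite -(scale1r x) ipl mul1r scale1r. Qed.
Lemma ip0l z : ip 0 z = 0.
Proof. have := ipDl 0 0 z; rewrite addr0 => /esym/eqP; by rewrite -subr_eq0 addrK => /eqP. Qed.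
Lemma ipZl a x z : ip (a *: x) z = a * ip x z.
Proof. by rewrite -(addr0 (a *: x)) ipl ip0l addr0. Qed.
Lemma ipDr x y z : ip z (x + y) = ip z x + ip z y.
Proof. by rewrite ipc ipDl rmorphD /= -!ipc. Qed.
Lemma ipZr (a : R[i]) x z : ip z (a *: x) = conjc a * ip z x.
Proof. by rewrite ipc ipZl rmorphM /= -ipc. Qed.
Lemma ip0r z : ip z 0 = 0.
Proof. by rewrite ipc ip0l conjc0. Qed.

Lemma real_conj (r : R[i]) : 0 <= r -> r^* = r.
Proof. move=> /ger0_real /complex_realP [k ->]; exact: conjc_real. Qed.

Lemma CS x y : `|ip x y| ^+ 2 <= ip x x * ip y y.
Proof.
set c := ip x y; set qy := ip y y; set qx := ip x x.
have := ipp (qy *: x + (- c) *: y).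
rewrite !ipDl !ipDr !ipZl !ipZr. rewrite (real_conj qy (ipp y)) (ipc x y) -/qx -/c -/qy rmorphN /= => H.
have {H}: 0 <= qy * (qx * qy - c * c^*).
  set L := (X in 0 <= X) in H.
  suff -> : qy * (qx * qy - c * c^*) = L by [].
  rewrite /L; ring.
rewrite sqr_normc.
have [qy0|qyn0] := eqVneq qy 0.
  move=> _; have y0 : y = 0 by apply: ipd.
  by rewrite /c y0 ip0r mul0r qy0 mulr0.
have qyp : 0 < qy by rewrite lt0r qyn0 ipp.
by rewrite pmulr_rge0 // subr_ge0.
Qed.

Lemma hnorm_ge0 x : 0 <= hnorm ip x.
Proof. by rewrite /hnorm sqrtC_ge0. Qed.

Lemma hnorm0 : hnorm ip 0 = 0.
Proof. by rewrite /hnorm ip0l sqrtC0. Qed.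

Lemma hnormD x y : hnorm ip (x + y) <= hnorm ip x + hnorm ip y.
Proof.
rewrite /hnorm; set sx := sqrtC (ip x x); set sy := sqrtC (ip y y).
have sx0 : 0 <= sx by rewrite sqrtC_ge0.
have sy0 : 0 <= sy by rewrite sqrtC_ge0.
rewrite -(sqrCK (addr_ge0 sx0 sy0)) ler_sqrtC ?nnegrE ?ipp ?exprn_ge0 ?addr_ge0 //.
rewrite ipDl !ipDr (ipc x y) sqrrD /sx /sy !sqrtCK -/sx -/sy.
set c := ip x y.
have key : c + c^* <= sx * sy *+ 2.
  rewrite addcJ -[sx * sy *+ 2]mulr_natl; apply: ler_wpM2l; first by rewrite ler0n.
  have h1 : (complex.Re c)%:C <= `|c|.
    apply: le_trans (normc_ge_Re c).
    by rewrite lecR real_ler_norm ?num_real.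
  apply: le_trans h1 _.
  rewrite -(ler_pXn2r (n := 2)) ?nnegrE ?normr_ge0 ?mulr_ge0 //.
  by rewrite exprMn /sx /sy !sqrtCK CS.
have -> : ip x x + c + (c^* + ip y y) = ip x x + ip y y + (c + c^*) by ring.
have -> : ip x x + sx * sy *+ 2 + ip y y = ip x x + ip y y + sx * sy *+ 2 by ring.
by rewrite lerD2l.
Qed.

Lemma hnormZ a x : hnorm ip (a *: x) = `|a| * hnorm ip x.
Proof.
rewrite /hnorm ipZl ipZr mulrA -sqr_normc sqrtCM ?nnegrE ?exprn_ge0 ?normr_ge0 ?ipp //.
by rewrite sqrCK ?normr_ge0.
Qed.

Lemma hnorm_sum n (f : nat -> V) :
  hnorm ip (\sum_(j < n) f j) <= \sum_(j < n) hnorm ip (f j).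
Proof.
elim: n => [|n IH]; first by rewrite !big_ord0 hnorm0.
rewrite !big_ord_recr /=; apply: le_trans (hnormD _ _) _.
by rewrite lerD2r.
Qed.

Lemma main (phi : (V -> V) -> (V -> V)) (A B C : V -> V) :
  maps_BH ip phi -> linear_on_BH ip phi ->
  bounded_op ip B -> bounded_op ip C ->
  (forall x, A x = B x + C x) -> phi B = B ->
  sot_conv ip (fun k => iter k phi C) (fun _ => 0) ->
  sot_conv ip (cesaro phi A) B.
Proof.
move=> mB lin bB bC hA pB hC.
have bCj : forall j, bounded_op ip (iter j phi C).
  by elim=> [|j IH] //=; apply: mB.
have EA : forall j, iter j phi A = (fun x => B x + iter j phi C x).
  elim=> [|j IH] /=; first by apply: functional_extensionality => x; exact: hA.
  rewrite IH.
  have -> : (fun x => B x + iter j phi C x) = (fun x => 1 *: B x + iter j phi C x).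
    by apply: functional_extensionality => x; rewrite scale1r.
  rewrite lin // pB; apply: functional_extensionality => x; by rewrite scale1r.
have ED : forall k x, (0 < k)%N ->
    cesaro phi A k x - B x = (k%:R)^-1 *: \sum_(j < k) iter j phi C x.
  move=> k x k0; rewrite /cesaro.
  under eq_bigr do rewrite EA.
  rewrite big_split /= sumr_const card_ord scalerDr -scalerMnr scalerMnl -mulr_natr mulVf.
    by rewrite scale1r addrC addKr.
  by rewrite pnatr_eq0 -lt0n.
move=> x e e0.
set e2 := e / 2%:R.
have e20 : 0 < e2 by rewrite divr_gt0 // ltr0n.
have [N HN] := hC x e2 e20.
set M := \sum_(j < N) hnorm ip (iter j phi C x).
have M0 : 0 <= M by apply: sumr_ge0 => j _; exact: hnorm_ge0.
have [bnd Hb] : exists bnd : nat, M < bnd%:R * e2.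
  have /complex_realP [m Em] := ger0_real M0.
  have /complex_realP [f Ef] := gtr0_real e20.
  have f0 : 0 < f by rewrite -ltcR -Ef.
  have m0 : 0 <= m by rewrite -lecR -Em.
  exists (Num.bound (m / f)); rewrite Em Ef.
  have -> : (Num.bound (m / f))%:R * f%:C = ((Num.bound (m / f))%:R * f)%:C.
    by rewrite rmorphM rmorph_nat.
  rewrite ltcR.
  by rewrite -ltr_pdivrMr // archi_boundP // divr_ge0 // ltW.
exists (N + bnd).+1 => n Hn.
have n0 : (0 < n)%N by apply: leq_trans Hn.
have Nn : (N <= n)%N by apply: leq_trans (leq_addr _ _) (ltnW Hn).
rewrite ED // hnormZ ger0_norm ?invr_ge0 ?ler0n //.
have nR0 : 0 < (n%:R : R[i]) by rewrite ltr0n.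
have ni0 : 0 <= (n%:R : R[i])^-1 by rewrite invr_ge0 ltW.
have HS := hnorm_sum n (fun j => iter j phi C x).
apply: le_lt_trans (ler_wpM2l ni0 HS) _.
rewrite -(big_mkord xpredT (fun j => hnorm ip (iter j phi C x))).
rewrite (big_cat_nat (leq0n N) Nn) /= big_mkord -/M.
have S2 : \sum_(N <= i < n) hnorm ip (iter i phi C x) <= e2 *+ n.
  apply: le_trans (_ : \sum_(N <= i < n) e2 <= _).
    apply: ler_sum_nat => i /andP [Hi _].
    by have := HN i Hi; rewrite subr0 => /ltW.
  rewrite sumr_const_nat -{2}(subnK Nn) mulrnDr lerDl mulrn_wge0 // ltW //.
have S3 : M + \sum_(N <= i < n) hnorm ip (iter i phi C x) <= M + e2 *+ n by rewrite lerD2l.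
apply: le_lt_trans (ler_wpM2l ni0 S3) _.
rewrite mulrDr -[e2 *+ n]mulr_natl mulrA mulVf ?mul1r; last by rewrite gt_eqF.
rewrite [e]splitr -/e2 ltrD2r ltr_pdivrMl // mulrC.
apply: lt_le_trans Hb _.
rewrite [e2 * _]mulrC; apply: ler_wpM2r; first exact: ltW.
rewrite ler_nat.
by apply: leq_trans (ltnW Hn); rewrite leq_addl.
Qed.
End H.

Theorem theorem3p2 (R : realType) (V : lmodType R[i]) (ip : V -> V -> R[i])
    (phi : (V -> V) -> (V -> V)) (A B C : V -> V) :
  is_hilbert ip ->
  maps_BH ip phi -> linear_on_BH ip phi -> positive_map ip phi ->
  wstar_continuous ip phi ->
  bounded_op ip A -> selfadjoint ip A -> op_le ip (phi A) A ->
  bounded_op ip B -> bounded_op ip C ->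
  (forall x, A x = B x + C x) ->
  selfadjoint ip B -> phi B = B ->
  positive_op ip C -> op_le ip (phi C) C ->
  sot_conv ip (fun k => iter k phi C) (fun _ => 0) ->
  sot_conv ip (cesaro phi A) B.
Proof.
move=> [ipl ipc ipp ipd _] mB lin _ _ _ _ _ bB bC hA _ pB _ _ hC.
have M1 := @main R V ip ipl ipc ipp ipd phi A B C mB lin bB bC hA pB.
move=> x e e0; apply: M1 => [y e1 e10|//].
have [N HN] := hC y e1 e10; exists N => k Hk; exact: HN.
Qed.
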